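(* Assume $(d,q)=(2,2)$. The third-order term of the Taylor expansion of $f(\bm{x})$ around the mode $\bm{x}=\bm{\theta}$ is either: (i) $0$ identically, in which case the asymptotic bias (AB) is equal to zero with an arbitrary $\mathrm{Q}$; (ii) of the form $\prod_{i=1}^3\bm{a}_i^\top(\bm{x}-\bm{\theta})$ with $\bm{a}_1,\bm{a}_2,\bm{a}_3$, any two of which are linearly independent, in which case there is a choice of $\mathrm{Q}$ with which the AB is equal to zero; (iii) neither identically $0$ nor of the form described in (ii), in which case the AB cannot be made equal to zero by any choice of $\mathrm{Q}$.
   Context: Let $f$ be a probability density function on $\mathbb{R}^d$ with unique mode $\bm{\theta}$ and non-singular Hessian $Hf(\bm{\theta})$, and let $\mathrm{A}=\{Hf(\bm{\theta})\}^{-1}$. The kernel mode estimator $\bm{\theta}_n$ (maximizer of a kernel density estimate with bandwidth $h_n$) uses an elliptic kernel $K_\mathrm{P}(\bm{x})=K(\mathrm{P}\bm{x})$, where $K(\cdot)=G(\|\cdot\|)$ is a $q$-th order radial-basis kernel and $\mathrm{P}$ is a $d\times d$ matrix with $|\det\mathrm{P}|=1$; let $\mathrm{Q}=\mathrm{P}^{-1}\mathrm{P}^{-\top}$ (positive definite). The asymptotic bias (AB) of $\bm{\theta}_n$ is $\mathrm{E}[\bm{\theta}_n-\bm{\theta}]\approx -\frac{\pi^{d/2}h_n^q}{2^{q-1}\Gamma(\frac{d+q}{2})\Gamma(\frac{q}{2}+1)}B_{d,q}(G)\,\mathrm{A}\,\nabla(\nabla^\top\mathrm{Q}\nabla)^{q/2}f(\bm{\theta})$,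 with $B_{d,q}(G)=\int_0^\infty x^{d-1+q}G(x)\,dx\neq 0$, so the AB vanishes iff $\nabla(\nabla^\top\mathrm{Q}\nabla)^{q/2}f(\bm{\theta})=\bm{0}_d$. *)

(* Defs.v *)
From HB Require Import structures.
From mathcomp Require Import all_boot all_order all_algebra.
From mathcomp Require Import all_classical all_reals all_analysis.
Set Implicit Arguments. Unset Strict Implicit. Unset Printing Implicit Defensive.
Import Order.TTheory GRing.Theory Num.Theory.
Import numFieldNormedType.Exports.
Local Open Scope ring_scope.

Definition evec (R : realType) (i : 'I_2) : 'rV[R]_2 := delta_mx 0 i.

Definition D3 (R : realType) (f : 'rV[R]_2 -> R) (th : 'rV[R]_2)
  (i j k : 'I_2) : R :=
  'D_(evec R i) ('D_(evec R j) ('D_(evec R k) f)) th.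

Definition taylor3 (R : realType) (f : 'rV[R]_2 -> R) (th x : 'rV[R]_2) : R :=
  (6%:R)^-1 * \sum_(i < 2) \sum_(j < 2) \sum_(k < 2)
     D3 f th i j k * (x - th) 0 i * (x - th) 0 j * (x - th) 0 k.

Definition admissibleQ (R : realType) (Q : 'M[R]_2) : Prop :=
  exists P : 'M[R]_2, `|\det P| = 1 /\ Q = invmx P *m (invmx P)^T.

(* The asymptotic bias vanishes iff  grad (grad^T Q grad)^{q/2} f (th) = 0;
   for q = 2 the k-th component is  sum_{i,j} Q_ij d_k d_i d_j f (th). *)
Definition AB_zero (R : realType) (f : 'rV[R]_2 -> R) (th : 'rV[R]_2)
  (Q : 'M[R]_2) : Prop :=
  forall k : 'I_2, \sum_(i < 2) \sum_(j < 2) Q i j * D3 f th k i j = 0.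

Definition lin (R : realType) (a v : 'rV[R]_2) : R := \sum_(i < 2) a 0 i * v 0 i.

Definition lin_indep2 (R : realType) (a b : 'rV[R]_2) : Prop :=
  row_free (col_mx a b).

Definition case_i (R : realType) (f : 'rV[R]_2 -> R) (th : 'rV[R]_2) : Prop :=
  forall x, taylor3 f th x = 0.

Definition case_ii (R : realType) (f : 'rV[R]_2 -> R) (th : 'rV[R]_2) : Prop :=
  exists a1 a2 a3 : 'rV[R]_2,
    [/\ lin_indep2 a1 a2, lin_indep2 a1 a3, lin_indep2 a2 a3 &
        forall x, taylor3 f th x = lin a1 (x - th) * lin a2 (x - th) * lin a3 (x - th)].

(* Main.v *)
Require Import Defs.
From HB Require Import structures.
From mathcomp Require Import all_boot all_order all_algebra.
From mathcomp Require Import all_classical all_reals all_analysis.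
From mathcomp Require Import complex.
From mathcomp Require Import ring lra.
Import Order.TTheory GRing.Theory Num.Theory.
Import numFieldNormedType.Exports.
Local Open Scope ring_scope.

Lemma sum2 {R : realType} (F : 'I_2 -> R) : \sum_(i < 2) F i = F 0 + F 1.
Proof. by rewrite big_ord_recl big_ord1; congr (_ + F _); apply: val_inj. Qed.

Lemma det2 {R : realType} (M : 'M[R]_2) : \det M = M 0 0 * M 1 1 - M 0 1 * M 1 0.
Proof.
rewrite (expand_det_row _ 0) sum2 /cofactor !det_mx11 !mxE /=.
rewrite !expr0 !expr1 mul1r mulN1r.
have -> : lift 0 0 = 1 :> 'I_2 by apply: val_inj.
have -> : lift 1 0 = 0 :> 'I_2 by apply: val_inj.
by rewrite mulrN.
Qed.

Definition vec2 {R : realType} (s t : R) : 'rV[R]_2 := \row_(j < 2) (if j == 0 then s else t).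
Lemma vec2E {R : realType} (s t : R) : vec2 s t 0 0 = s /\ vec2 s t 0 1 = t.
Proof. rewrite /vec2 !mxE; split; first by []. by []. Qed.

Lemma cube_root {R : realType} (A B : R) : exists x y : R,
  x^+3 - 3 * x * y^+2 = A /\ 3 * x^+2 * y - y^+3 = B.
Proof.
pose z : R[i] := (A +i* B)%C.
pose w := 3.-root z.
have hw : w ^+ 3 = z by rewrite /w rootCK.
exists (complex.Re w), (complex.Im w).
move: hw; case: w => x y.
rewrite /z !exprS expr0 mulr1 /=.
move=> [<- <-]; split; ring.
Qed.

Lemma mulmxT {R : realType} (M : 'M[R]_2) (i j : 'I_2) : (M *m M^T) i j = M i 0 * M j 0 + M i 1 * M j 1 :> R.
Proof. by rewrite mxE sum2 !mxE. Qed.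

Lemma adm_M {R : realType} (P : 'M[R]_2) : `|\det P| = 1 -> exists M : 'M[R]_2,
  `|\det M| = 1 /\ invmx P *m (invmx P)^T = M *m M^T.
Proof.
move=> hP; exists (invmx P); split => //.
have uP : P \in unitmx by rewrite unitmxE unitfE -normr_eq0 hP oner_eq0.
have dP : \det P != 0 by rewrite -normr_eq0 hP oner_eq0.
by rewrite det_inv normrV ?unitfE // hP invr1.
Qed.

Lemma M_adm {R : realType} (M : 'M[R]_2) : `|\det M| = 1 ->
  exists P : 'M[R]_2, `|\det P| = 1 /\ M *m M^T = invmx P *m (invmx P)^T.
Proof.
move=> hM.
have uM : M \in unitmx by rewrite unitmxE unitfE -normr_eq0 hM oner_eq0.
exists (invmx M); rewrite invmxK; split => //.
have dM : \det M != 0 by rewrite -normr_eq0 hM oner_eq0.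
by rewrite det_inv normrV ?unitfE // hM invr1.
Qed.

Lemma indepE {R : realType} (a b : 'rV[R]_2) :
  row_free (col_mx a b) <-> a 0 0 * b 0 1 - a 0 1 * b 0 0 != 0.
Proof.
have -> : row_free (col_mx a b) = ((col_mx a b : 'M[R]_2) \in unitmx) by exact: row_free_unit.
rewrite unitmxE unitfE det2.
have hu j : col_mx a b 0 j = a 0 j.
  have -> : (0 : 'I_(1+1)) = lshift 1 (0 : 'I_1) by apply: val_inj.
  by rewrite col_mxEu.
have hd j : col_mx a b 1 j = b 0 j.
  have -> : (1 : 'I_(1+1)) = rshift 1 (0 : 'I_1) by apply: val_inj.
  by rewrite col_mxEd.
by rewrite !hu !hd.
Qed.


Definition cub {R : realType} (a b c d v0 v1 : R) :=
  a * v0^+3 + 3 * b * v0^+2 * v1 + 3 * c * v0 * v1^+2 + d * v1^+3.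

Lemma D3sym {R : realType} (f : 'rV[R]_2 -> R) th
  (Hsym : forall i j k : 'I_2,
     D3 f th i j k = D3 f th j i k /\ D3 f th i j k = D3 f th i k j) :
  [/\ D3 f th 0 1 0 = D3 f th 0 0 1, D3 f th 1 0 0 = D3 f th 0 0 1,
      D3 f th 1 0 1 = D3 f th 0 1 1 & D3 f th 1 1 0 = D3 f th 0 1 1].
Proof.
have [h1 h2] := Hsym 0 0 1.
have [h3 h4] := Hsym 0 1 0.
have [h5 h6] := Hsym 0 1 1.
have [h7 h8] := Hsym 1 0 1.
split; congruence.
Qed.

Lemma taylorE {R : realType} (f : 'rV[R]_2 -> R) th
  (Hsym : forall i j k : 'I_2,
     D3 f th i j k = D3 f th j i k /\ D3 f th i j k = D3 f th i k j) x :
  taylor3 f th x = 6^-1 * cub (D3 f th 0 0 0) (D3 f th 0 0 1) (D3 f th 0 1 1)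
     (D3 f th 1 1 1) ((x - th) 0 0) ((x - th) 0 1).
Proof.
have [e1 e2 e3 e4] := D3sym f th Hsym.
rewrite /taylor3 !sum2 e1 e2 e3 e4 /cub.
move: (D3 f th 0 0 0) (D3 f th 0 0 1) (D3 f th 0 1 1) (D3 f th 1 1 1) ((x - th) 0 0) ((x - th) 0 1).
by move=> a b c d v0 v1; ring.
Qed.

Lemma shiftE {R : realType} (th : 'rV[R]_2) s t :
  (th + vec2 s t - th) 0 0 = s /\ (th + vec2 s t - th) 0 1 = t.
Proof. by rewrite (addrC th) addrK; exact: vec2E. Qed.

Lemma ABE {R : realType} (f : 'rV[R]_2 -> R) th
  (Hsym : forall i j k : 'I_2,
     D3 f th i j k = D3 f th j i k /\ D3 f th i j k = D3 f th i k j) (Q : 'M[R]_2) :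
  AB_zero f th Q <->
  (Q 0 0 * D3 f th 0 0 0 + (Q 0 1 + Q 1 0) * D3 f th 0 0 1 + Q 1 1 * D3 f th 0 1 1 = 0 /\
   Q 0 0 * D3 f th 0 0 1 + (Q 0 1 + Q 1 0) * D3 f th 0 1 1 + Q 1 1 * D3 f th 1 1 1 = 0).
Proof.
have [e1 e2 e3 e4] := D3sym f th Hsym.
rewrite /AB_zero; move: (D3 f th) e1 e2 e3 e4 => D e1 e2 e3 e4.
have hQ : forall k : 'I_2, \sum_(i < 2) \sum_(j < 2) Q i j * D k i j =
   Q 0 0 * D k 0 0 + Q 0 1 * D k 0 1 + Q 1 0 * D k 1 0 + Q 1 1 * D k 1 1.
  by move=> k; rewrite !sum2 addrA.
split.
  move=> H; have := H 0; have := H 1; rewrite !hQ e1 e2 e3 e4.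
  move: (D 0 0 0) (D 0 0 1) (D 0 1 1) (D 1 1 1) (Q 0 0) (Q 0 1) (Q 1 0) (Q 1 1) => a b c d q00 q01 q10 q11 h1 h0.
  by split; [rewrite -[RHS]h0 | rewrite -[RHS]h1]; ring.
move=> [h0 h1] k.
have [->|->] : k = 0 \/ k = 1.
  by case: k => [[|[|//]]] /= ?; [left|right]; apply: val_inj.
  rewrite hQ ?e1 ?e2 ?e3 ?e4; move: h0.
  by move: (D 0 0 0) (D 0 0 1) (D 0 1 1) (D 1 1 1) (Q 0 0) (Q 0 1) (Q 1 0) (Q 1 1) => a b c d q00 q01 q10 q11 h0; rewrite -[RHS]h0; ring.
rewrite hQ ?e1 ?e2 ?e3 ?e4; move: h1.
by move: (D 0 0 0) (D 0 0 1) (D 0 1 1) (D 1 1 1) (Q 0 0) (Q 0 1) (Q 1 0) (Q 1 1) => a b c d q00 q01 q10 q11 h1; rewrite -[RHS]h1; ring.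
Qed.


Lemma harm_id {R : realType} (a b c d m00 m01 m10 m11 w0 w1 : R) :
  (m00* m00 + m01* m01) * a + ((m00* m10 + m01* m11) + (m10* m00 + m11* m01)) * b
    + (m10* m10 + m11* m11) * c = 0 ->
  (m00* m00 + m01* m01) * b + ((m00* m10 + m01* m11) + (m10* m00 + m11* m01)) * c
    + (m10* m10 + m11* m11) * d = 0 ->
  cub a b c d (m00*w0 + m01*w1) (m10*w0 + m11*w1) =
    cub a b c d m00 m10 * (w0^+3 - 3*w0*w1^+2) +
    (a* m00^+2* m01 + b*(m00^+2* m11 + 2* m00* m10* m01) + c*(m10^+2* m01 + 2* m00* m10* m11)
       + d* m10^+2* m11) * (3*w0^+2*w1 - w1^+3).
Proof.
move=> h0 h1.
apply/eqP; rewrite -subr_eq0; apply/eqP.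
transitivity (3*w0*w1^+2*(m00 * ((m00* m00 + m01* m01) * a + ((m00* m10 + m01* m11) + (m10* m00 + m11* m01)) * b
    + (m10* m10 + m11* m11) * c) + m10 * ((m00* m00 + m01* m01) * b + ((m00* m10 + m01* m11) + (m10* m00 + m11* m01)) * c
    + (m10* m10 + m11* m11) * d)) + w1^+3 * (m01 * ((m00* m00 + m01* m01) * a + ((m00* m10 + m01* m11) + (m10* m00 + m11* m01)) * b
    + (m10* m10 + m11* m11) * c) + m11 * ((m00* m00 + m01* m01) * b + ((m00* m10 + m01* m11) + (m10* m00 + m11* m01)) * c
    + (m10* m10 + m11* m11) * d))).
  rewrite /cub.
ring.
rewrite h0 h1.
ring.
Qed.

Lemma sq_pos {R : realType} (x : R) : x != 0 -> 0 < x ^+ 2.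
Proof. by move=> h; rewrite lt_def sqrf_eq0 h sqr_ge0. Qed.

Lemma chol {R : realType} (q00 q01 q11 : R) : 0 < q00 -> 0 < q00 * q11 - q01 ^+ 2 ->
  exists M : 'M[R]_2, exists k : R, [/\ `|\det M| = 1, 0 < k,
   M 0 0 * M 0 0 + M 0 1 * M 0 1 = k * q00,
   M 0 0 * M 1 0 + M 0 1 * M 1 1 = k * q01 &
   M 1 0 * M 1 0 + M 1 1 * M 1 1 = k * q11].
Proof.
move=> h0 hD.
move: hD; set D := q00 * q11 - q01 ^+ 2 => hD.
pose t := Num.sqrt q00. pose e := Num.sqrt (D / q00).
have ht : t ^+ 2 = q00 by rewrite sqr_sqrtr // ltW.
have he : e ^+ 2 = D / q00 by rewrite sqr_sqrtr // ltW // divr_gt0.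
have tpos : 0 < t by rewrite sqrtr_gt0.
have epos : 0 < e by rewrite sqrtr_gt0 divr_gt0.
pose g := Num.sqrt (t * e).
have hg : g ^+ 2 = t * e by rewrite sqr_sqrtr // ltW // mulr_gt0.
have gpos : 0 < g by rewrite sqrtr_gt0 mulr_gt0.
have tn : t != 0 by rewrite gt_eqF.
have gn : g != 0 by rewrite gt_eqF.
have qn : q00 != 0 by rewrite gt_eqF.
pose M := \matrix_(i < 2, j < 2) (g^-1 * (if i == 0 then (if j == 0 then t else 0)
                                 else (if j == 0 then q01 / t else e))).
exists M, (g ^+ 2)^-1.
rewrite det2 !mxE /=.
split.
- have -> : g^-1 * t * (g^-1 * e) - g^-1 * 0 * (g^-1 * (q01 / t)) = (t * e) / g ^+ 2.
    by field; rewrite ?gn ?tn ?qn.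
  by rewrite -hg divff ?normr1 //; exact: expf_neq0.
- by rewrite invr_gt0 exprn_gt0.
- by rewrite -ht; field; rewrite ?gn ?tn ?qn.
- by field; rewrite ?gn ?tn ?qn.
transitivity ((g ^+ 2)^-1 * (q01 ^+ 2 / t ^+ 2 + e ^+ 2)); first by field; rewrite ?gn ?tn ?qn.
by rewrite he ht /D; field; rewrite ?gn ?tn ?qn.
Qed.

Lemma part1 {R : realType} (f : 'rV[R]_2 -> R) th
  (Hsym : forall i j k : 'I_2,
     D3 f th i j k = D3 f th j i k /\ D3 f th i j k = D3 f th i k j) :
  case_i f th -> forall Q, admissibleQ Q -> AB_zero f th Q.
Proof.
move=> H Q _.
have key s t : cub (D3 f th 0 0 0) (D3 f th 0 0 1) (D3 f th 0 1 1) (D3 f th 1 1 1) s t = 0.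
  have := H (th + vec2 s t); rewrite (taylorE f th Hsym).
  have [-> ->] := shiftE th s t.
  move/eqP; rewrite mulf_eq0 invr_eq0 pnatr_eq0 /=; exact/eqP.
apply/(ABE f th Hsym).
move: key; move: (D3 f th 0 0 0) (D3 f th 0 0 1) (D3 f th 0 1 1) (D3 f th 1 1 1) => a b c d key.
have k10 := key 1 0; have k01 := key 0 1; have k11 := key 1 1; have k1m := key 1 (-1).
move: k10 k01 k11 k1m; rewrite /cub => k10 k01 k11 k1m.
have ha : a = 0 by lra.
have hd : d = 0 by lra.
have hb : b = 0 by lra.
have hc : c = 0 by lra.
by rewrite ha hb hc hd !mulr0 !addr0.
Qed.

Lemma part2 {R : realType} (f : 'rV[R]_2 -> R) th
  (Hsym : forall i j k : 'I_2,
     D3 f th i j k = D3 f th j i k /\ D3 f th i j k = D3 f th i k j) :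
  case_ii f th -> exists Q, admissibleQ Q /\ AB_zero f th Q.
Proof.
move=> [p [q [r [hpq hpr hqr hT]]]].
move/indepE: hpq => hpq; move/indepE: hpr => hpr; move/indepE: hqr => hqr.
have key s t : cub (D3 f th 0 0 0) (D3 f th 0 0 1) (D3 f th 0 1 1) (D3 f th 1 1 1) s t =
   6 * ((p 0 0 * s + p 0 1 * t) * (q 0 0 * s + q 0 1 * t) * (r 0 0 * s + r 0 1 * t)).
  have := hT (th + vec2 s t); rewrite (taylorE f th Hsym) /lin !sum2.
  have [-> ->] := shiftE th s t => <-.
  by rewrite mulrA mulfV ?mul1r // pnatr_eq0.
suff [q00 [q01 [q11 [h0 hD E0 E1]]]] : exists q00 q01 q11 : R, [/\ 0 < q00,
   0 < q00 * q11 - q01 ^+ 2,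
   q00 * D3 f th 0 0 0 + (q01 + q01) * D3 f th 0 0 1 + q11 * D3 f th 0 1 1 = 0 &
   q00 * D3 f th 0 0 1 + (q01 + q01) * D3 f th 0 1 1 + q11 * D3 f th 1 1 1 = 0].
  have [M [k [hM hk e00 e01 e11]]] := chol q00 q01 q11 h0 hD.
  have [P [hP eP]] := M_adm M hM.
  exists (M *m M^T); split; first by exists P.
  apply/(ABE f th Hsym); rewrite !mulmxT.
  have e10 : M 1 0 * M 0 0 + M 1 1 * M 0 1 = k * q01.
    by rewrite mulrC (mulrC (M 1 1)).
  rewrite e00 e01 e10 e11.
  move: E0 E1; move: (D3 f th 0 0 0) (D3 f th 0 0 1) (D3 f th 0 1 1) (D3 f th 1 1 1).
  move=> a b c d E0 E1; split.
    by rewrite -(mulr0 k) -[in RHS]E0; ring.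
  by rewrite -(mulr0 k) -[in RHS]E1; ring.
move: key; move: (D3 f th 0 0 0) (D3 f th 0 0 1) (D3 f th 0 1 1) (D3 f th 1 1 1) => a b c d key.
move: hpq hpr hqr key; move: (p 0 0) (p 0 1) (q 0 0) (q 0 1) (r 0 0) (r 0 1).
move=> p0 p1 q0 q1 r0 r1 hpq hpr hqr key.
have k10 := key 1 0; have k01 := key 0 1; have k11 := key 1 1; have k1m := key 1 (-1).
move: k10 k01 k11 k1m; rewrite /cub => k10 k01 k11 k1m.
have ha : a = 6 * (p0 * q0 * r0) by move: k10; rewrite !expr1n !expr0n /=; lra.
have hd : d = 6 * (p1 * q1 * r1) by move: k01; rewrite !expr1n !expr0n /=; lra.
have hb : b = 2 * (p0 * q0 * r1 + p0 * q1 * r0 + p1 * q0 * r0) by nra.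
have hc : c = 2 * (p0 * q1 * r1 + p1 * q0 * r1 + p1 * q1 * r0) by nra.
pose U := r0 * q1 - r1 * q0.
pose W := p0 * r1 - p1 * r0.
have hU : U != 0.
  have -> : U = - (q0 * r1 - q1 * r0) by rewrite /U; ring.
  by rewrite oppr_eq0.
have hW : W != 0 by [].
exists (2 * W ^+ 2 * q1 ^+ 2 + 2 * U * W * p1 * q1 + 2 * U ^+ 2 * p1 ^+ 2).
exists (- 2 * W ^+ 2 * q0 * q1 - U * W * q1 * p0 - U * W * p1 * q0 - 2 * U ^+ 2 * p0 * p1).
exists (2 * W ^+ 2 * q0 ^+ 2 + 2 * U * W * p0 * q0 + 2 * U ^+ 2 * p0 ^+ 2).
have hdet : (2 * W ^+ 2 * q1 ^+ 2 + 2 * U * W * p1 * q1 + 2 * U ^+ 2 * p1 ^+ 2) *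
   (2 * W ^+ 2 * q0 ^+ 2 + 2 * U * W * p0 * q0 + 2 * U ^+ 2 * p0 ^+ 2) -
   (- 2 * W ^+ 2 * q0 * q1 - U * W * q1 * p0 - U * W * p1 * q0 - 2 * U ^+ 2 * p0 * p1) ^+ 2
   = 3 * ((p0 * q1 - p1 * q0) * U * W) ^+ 2 by ring.
have hDpos : 0 < 3 * ((p0 * q1 - p1 * q0) * U * W) ^+ 2.
  by rewrite mulr_gt0 // sq_pos // !mulf_neq0.
split.
- rewrite lt_def; apply/andP; split.
    apply/eqP => h00; move: hDpos; rewrite -hdet h00 mul0r sub0r oppr_gt0 ltNge.
    by rewrite sqr_ge0.
  have -> : 2 * W ^+ 2 * q1 ^+ 2 + 2 * U * W * p1 * q1 + 2 * U ^+ 2 * p1 ^+ 2 =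
     (W * q1 + U * p1) ^+ 2 + (W * q1) ^+ 2 + (U * p1) ^+ 2 by ring.
  by rewrite !addr_ge0 ?sqr_ge0.
- by rewrite hdet.
- by rewrite ha hb hc /U /W; ring.
- by rewrite hd hb hc /U /W; ring.
Qed.

Lemma core3 {R : realType} (a b c d m00 m01 m10 m11 : R) :
  (m00 * m00 + m01 * m01) * a + ((m00 * m10 + m01 * m11) + (m10 * m00 + m11 * m01)) * b
    + (m10 * m10 + m11 * m11) * c = 0 ->
  (m00 * m00 + m01 * m01) * b + ((m00 * m10 + m01 * m11) + (m10 * m00 + m11 * m01)) * c
    + (m10 * m10 + m11 * m11) * d = 0 ->
  (m00 * m11 - m01 * m10) ^+ 2 = 1 ->
  ~ (forall s t, cub a b c d s t = 0) ->
  exists al0 al1 be0 be1 : R, al0 * be1 - al1 * be0 != 0 /\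
    forall s t, cub a b c d s t = (al0 * s + al1 * t) ^+ 3
        - 3 * (al0 * s + al1 * t) * (be0 * s + be1 * t) ^+ 2.
Proof.
move=> E0 E1 hd2 nz.
have [x [y [hx hy]]] := cube_root (cub a b c d m00 m10)
  (a * m00 ^+ 2 * m01 + b * (m00 ^+ 2 * m11 + 2 * m00 * m10 * m01)
   + c * (m10 ^+ 2 * m01 + 2 * m00 * m10 * m11) + d * m10 ^+ 2 * m11).
pose dl := m00 * m11 - m01 * m10.
have Fid s t : cub a b c d s t =
   (dl * (x * m11 - y * m10) * s + dl * (y * m00 - x * m01) * t) ^+ 3
   - 3 * (dl * (x * m11 - y * m10) * s + dl * (y * m00 - x * m01) * t)
       * (dl * (- x * m10 - y * m11) * s + dl * (x * m00 + y * m01) * t) ^+ 2.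
  pose w0 := dl * (m11 * s - m01 * t).
  pose w1 := dl * (m00 * t - m10 * s).
  have es : m00 * w0 + m01 * w1 = s.
    by transitivity (dl ^+ 2 * s); [rewrite /w0 /w1 /dl; ring | rewrite hd2 mul1r].
  have et : m10 * w0 + m11 * w1 = t.
    by transitivity (dl ^+ 2 * t); [rewrite /w0 /w1 /dl; ring | rewrite hd2 mul1r].
  have := harm_id a b c d m00 m01 m10 m11 w0 w1 E0 E1; rewrite es et => ->.
  by rewrite -hx -hy /w0 /w1; ring.
have hdl : dl != 0 by apply/eqP => h; move: hd2; rewrite -/dl h expr0n /= => /eqP; rewrite eq_sym oner_eq0.
have hxy : x ^+ 2 + y ^+ 2 != 0.
  apply/eqP => h.
  have x0 : x = 0 by nra.
  have y0 : y = 0 by nra.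
  apply: nz => s t; rewrite Fid x0 y0; ring.
exists (dl * (x * m11 - y * m10)), (dl * (y * m00 - x * m01)),
       (dl * (- x * m10 - y * m11)), (dl * (x * m00 + y * m01)); split => //.
have -> : dl * (x * m11 - y * m10) * (dl * (x * m00 + y * m01)) -
  dl * (y * m00 - x * m01) * (dl * (- x * m10 - y * m11)) = dl ^+ 2 * (x ^+ 2 + y ^+ 2) * dl.
  by rewrite /dl; ring.
by rewrite hd2 mul1r mulf_neq0.
Qed.

Lemma vec2E0 {R : realType} (s t : R) : vec2 s t 0 0 = s. Proof. exact: (vec2E s t).1. Qed.
Lemma vec2E1 {R : realType} (s t : R) : vec2 s t 0 1 = t. Proof. exact: (vec2E s t).2. Qed.

Lemma part3 {R : realType} (f : 'rV[R]_2 -> R) th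
  (Hsym : forall i j k : 'I_2,
     D3 f th i j k = D3 f th j i k /\ D3 f th i j k = D3 f th i k j) :
  ~ case_i f th -> ~ case_ii f th -> forall Q, admissibleQ Q -> ~ AB_zero f th Q.
Proof.
move=> n1 n2 Q [P [hP ->]] hAB.
have [M [hM eM]] := adm_M P hP.
rewrite eM in hAB.
move/(ABE f th Hsym): hAB; rewrite !mulmxT => -[E0 E1].
have hd2 : (M 0 0 * M 1 1 - M 0 1 * M 1 0) ^+ 2 = 1.
  by rewrite -det2 -real_normK ?num_real // hM expr1n.
have nz : ~ (forall s t, cub (D3 f th 0 0 0) (D3 f th 0 0 1) (D3 f th 0 1 1) (D3 f th 1 1 1) s t = 0).
  by move=> hz; apply: n1 => z; rewrite (taylorE f th Hsym) hz mulr0.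
have [al0 [al1 [be0 [be1 [hab Fid]]]]] := core3 (D3 f th 0 0 0) (D3 f th 0 0 1) (D3 f th 0 1 1) (D3 f th 1 1 1)
   (M 0 0) (M 0 1) (M 1 0) (M 1 1) E0 E1 hd2 nz.
apply: n2.
pose s3 := Num.sqrt (3 : R).
have s3pos : 0 < s3 by rewrite sqrtr_gt0.
have s3n : s3 != 0 by rewrite gt_eqF.
have hs3 : s3 ^+ 2 = 3 by rewrite sqr_sqrtr // ler0n.
exists (vec2 (al0 / 6) (al1 / 6)), (vec2 (al0 - s3 * be0) (al1 - s3 * be1)),
       (vec2 (al0 + s3 * be0) (al1 + s3 * be1)).
have n6 : (6 : R) != 0 by rewrite pnatr_eq0.
split.
- apply/indepE; rewrite !vec2E0 !vec2E1.
  have -> : al0 / 6 * (al1 - s3 * be1) - al1 / 6 * (al0 - s3 * be0) =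
    - (s3 / 6) * (al0 * be1 - al1 * be0) by field.
  by rewrite !mulf_neq0 // ?oppr_eq0 ?mulf_neq0 // invr_eq0.
- apply/indepE; rewrite !vec2E0 !vec2E1.
  have -> : al0 / 6 * (al1 + s3 * be1) - al1 / 6 * (al0 + s3 * be0) =
    (s3 / 6) * (al0 * be1 - al1 * be0) by field.
  by rewrite !mulf_neq0 // invr_eq0.
- apply/indepE; rewrite !vec2E0 !vec2E1.
  have -> : (al0 - s3 * be0) * (al1 + s3 * be1) - (al1 - s3 * be1) * (al0 + s3 * be0) =
    (2 * s3) * (al0 * be1 - al1 * be0) by ring.
  by rewrite !mulf_neq0 // pnatr_eq0.
move=> z; rewrite (taylorE f th Hsym) Fid /lin !sum2 !vec2E0 !vec2E1.
move: ((z - th) 0 0) ((z - th) 0 1) => u v.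
transitivity (6^-1 * (al0 * u + al1 * v) * ((al0 * u + al1 * v) ^+ 2
   - s3 ^+ 2 * (be0 * u + be1 * v) ^+ 2)).
  by rewrite hs3; ring.
by field.
Qed.

Theorem proposition6 (R : realType) (f : 'rV[R]_2 -> R) (th : 'rV[R]_2)
  (Hsym : forall i j k : 'I_2,
     D3 f th i j k = D3 f th j i k /\ D3 f th i j k = D3 f th i k j) :
  (case_i f th -> forall Q, admissibleQ Q -> AB_zero f th Q) /\
  (case_ii f th -> exists Q, admissibleQ Q /\ AB_zero f th Q) /\
  (~ case_i f th -> ~ case_ii f th -> forall Q, admissibleQ Q -> ~ AB_zero f th Q).
Proof.
split; first exact: (part1 f th Hsym).
split; first exact: (part2 f th Hsym).
exact: (part3 f th Hsym).
Qed.
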